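(* Let $L\ge2$, $k\ge2$ be integers, $\kappa:\{1,\dots,k-1\}\times\mathbb{N}\to\{0,\dots,L-1\}$ a map, and $(a(n))_{n=0}^\infty$ an $(L,k,\kappa)$-TM sequence. Then the $(L,k,\kappa)$-TM sequence is $n$-period if and only if $(a(n))_{n=0}^\infty$ is a $k$-automatic sequence.
   Context: $\mathbb{N}$ is the set of non-negative integers. Let $a_0,\dots,a_{L-1}$ be pairwise distinct complex numbers and $f$ the map on $\{a_0,\dots,a_{L-1}\}$ with $f(a_i)=a_{i+1}$ (indices mod $L$), extended letterwise to words, with iterates $f^j$, $f^0=\mathrm{id}$. Define $A_0=a_0$, $A_{n+1}=A_n\,f^{\kappa(1,n)}(A_n)\cdots f^{\kappa(k-1,n)}(A_n)$ (concatenation); the limit infinite word, indexed from $0$, is the $(L,k,\kappa)$-TM sequence. It is called $n$-period if there exist integers $N\ge0$ and $t>0$ with $\kappa(s,n)=\kappa(s,n+t)$ for all $1\le s\le k-1$ and all $n\ge N$. The $k$-kernel of a sequence $(a(n))$ is the set of subsequences $(a(k^en+j))_{n=0}^\infty$ with $e\ge0$, $0\le j\le k^e-1$; the sequence is $k$-automatic if its $k$-kernel is finite. *)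

(* Defs.v *)
From mathcomp Require Import all_boot all_algebra.
From mathcomp Require Import all_classical all_reals.
From mathcomp Require Export complex.

Unset Implicit Arguments.
Unset Strict Implicit.
Unset Printing Implicit Defensive.

Local Open Scope classical_set_scope.

(* Words are represented by the sequence of indices i of their letters a_i
   (0 <= i < L). The letter map f(a_i) = a_{i+1 mod L} becomes i |-> (i+1) %% L,
   so f^j acts letterwise as i |-> (i + j) %% L. *)
Definition fpow (L j : nat) (w : seq nat) : seq nat :=
  [seq (i + j) %% L | i <- w].

Fixpoint TMword (L k : nat) (kappa : nat -> nat -> 'I_L) (n : nat) : seq nat :=
  match n with
  | 0 => [:: 0]
  | n'.+1 =>
      let A := TMword L k kappa n' in
      A ++ flatten [seq fpow L (kappa s n') A | s <- iota 1 k.-1]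
  end.

(* The limit infinite word: A_n is a prefix of A_{n+1} and |A_n| = k^n, so the
   m-th letter of the limit is the m-th letter of A_{m+1} (|A_{m+1}| > m). *)
Definition TMseq (R : realType) (L k : nat) (a : nat -> R[i])
  (kappa : nat -> nat -> 'I_L) (m : nat) : R[i] :=
  a (nth 0 (TMword L k kappa m.+1) m).

Definition n_period (L k : nat) (kappa : nat -> nat -> 'I_L) : Prop :=
  exists N t : nat, 0 < t /\
    forall s n, 1 <= s <= k.-1 -> N <= n -> kappa s n = kappa s (n + t).

Definition k_kernel (T : Type) (k : nat) (u : nat -> T) : set (nat -> T) :=
  [set g | exists e j : nat, j <= k ^ e - 1 /\ g = (fun n => u (k ^ e * n + j))].

Definition k_automatic (T : Type) (k : nat) (u : nat -> T) : Prop :=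
  finite_set (k_kernel T k u).

(* Main.v *)
Require Import Defs.
From mathcomp Require Import all_boot all_algebra.
From mathcomp Require Import all_classical all_reals.
From mathcomp Require Import complex.
From mathcomp Require Import zify.

Definition digit (k i m : nat) := (m %/ k ^ i) %% k.
Definition kap L (kappa : nat -> nat -> 'I_L) (s e : nat) : nat :=
  if s == 0 then 0 else kappa s e.
Definition Ssum L k (kappa : nat -> nat -> 'I_L) n b m :=
  (\sum_(i < n) kap L kappa (digit k i m) (b + i))%N.

Lemma digit_split k e i m j : 0 < k -> j < k ^ e ->
  digit k i (k ^ e * m + j) = if i < e then digit k i j else digit k (i - e) m.
Proof.
move=> k0 je; rewrite /digit; case: ltnP => ie.
  have -> : k ^ e = k ^ (e - i - 1) * k * k ^ i.
    by rewrite -expnSr -expnD; congr (_ ^ _); lia.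
  rewrite -mulnA (mulnC (k ^ i)) mulnA divnMDl ?expn_gt0 ?k0 //.
  by rewrite mulnAC modnMDl.
have -> : k ^ i = k ^ e * k ^ (i - e) by rewrite -expnD; congr (_ ^ _); lia.
by rewrite divnMA mulnC divnMDl ?expn_gt0 ?k0 // (divn_small je) addn0.
Qed.

Lemma Ssum_split L k kappa b e M m j : 0 < k -> j < k ^ e ->
  Ssum L k kappa (e + M) b (k ^ e * m + j) =
  Ssum L k kappa e b j + Ssum L k kappa M (b + e) m.
Proof.
move=> k0 je; rewrite /Ssum big_split_ord /=; congr addn; apply: eq_bigr => i _.
  by rewrite digit_split // ltn_ord.
rewrite digit_split //= ltnNge leq_addr /= addnA; congr kap; congr digit; lia.
Qed.

Lemma Ssum0 L k kappa M b : Ssum L k kappa M b 0 = 0.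
Proof. by rewrite /Ssum big1 // => i _; rewrite /digit div0n mod0n. Qed.

Lemma Ssum_ext L k kappa b m n1 n2 : 0 < k -> m < k ^ n1 -> m < k ^ n2 ->
  Ssum L k kappa n1 b m = Ssum L k kappa n2 b m.
Proof.
move=> k0.
wlog le: n1 n2 / n1 <= n2.
  move=> H h1 h2; case: (leqP n1 n2) => h; first exact: H.
  by symmetry; apply: H => //; apply: ltnW.
move=> h1 _; have := Ssum_split L k kappa b n1 (n2 - n1) 0 m k0 h1.
by rewrite muln0 add0n Ssum0 addn0 subnKC.
Qed.

Lemma size_flatten_blocks (F : nat -> seq nat) z b c :
  (forall s, size (F s) = z) -> size (flatten [seq F s | s <- iota b c]) = c * z.
Proof.
move=> Fz; elim: c b => [|c IH] b //=.
by rewrite size_cat IH Fz mulSn.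
Qed.

Lemma nth_flatten_blocks (F : nat -> seq nat) z b c q r :
  (forall s, size (F s) = z) -> q < c -> r < z ->
  nth 0 (flatten [seq F s | s <- iota b c]) (q * z + r) = nth 0 (F (b + q)) r.
Proof.
move=> Fz; elim: c b q => [|c IH] b q //= qc rz.
rewrite nth_cat Fz; case: q qc => [|q] qc.
  by rewrite mul0n add0n rz addn0.
rewrite mulSn -addnA ltnNge leq_addr /= addKn IH //.
by rewrite addSnnS.
Qed.

Lemma TMword_spec L k kappa : 2 <= k -> forall n,
  size (TMword L k kappa n) = k ^ n /\
  forall m, m < k ^ n -> nth 0 (TMword L k kappa n) m = Ssum L k kappa n 0 m %% L.
Proof.
move=> k2; have k0 : 0 < k by lia.
elim=> [|n [IHs IHn]].
  by split=> // -[|m] //= _; rewrite Ssum0 mod0n.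
have kk : k * k ^ n = k ^ n + k.-1 * k ^ n by rewrite -{1}(prednK k0) mulSn.
have Fz : forall s, size (fpow L (kappa s n) (TMword L k kappa n)) = k ^ n.
  by move=> s; rewrite size_map IHs.
split.
  rewrite /= size_cat (size_flatten_blocks _ _ _ _ Fz) IHs expnS.
  by rewrite kk.
move=> m mk; rewrite /= nth_cat IHs; case: ltnP => mn.
  by rewrite IHn // (Ssum_ext _ _ _ _ _ n.+1 n) // ltn_expl.
set m' := m - k ^ n.
have kn0 : 0 < k ^ n by rewrite expn_gt0 k0.
have q_lt : m' %/ k ^ n < k.-1.
  rewrite ltn_divLR //; move: mk mn; rewrite expnS kk /m'; move: (k.-1 * k ^ n) (k ^ n) => A B; lia.
rewrite (divn_eq m' (k ^ n)) (nth_flatten_blocks _ _ _ _ _ _ Fz) ?ltn_pmod //.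
set q := m' %/ k ^ n; set r := m' %% k ^ n.
have rlt : r < k ^ n by rewrite /r ltn_pmod.
have mdef : m = k ^ n * q.+1 + r.
  by rewrite mulnS -addnA (mulnC (k ^ n) q) /q /r -divn_eq /m' subnKC.
have q_lt' : q < k.-1 by [].
clearbody q r.
rewrite (nth_map 0); last by rewrite IHs.
rewrite IHn // modnDml.
rewrite mdef.
rewrite -[n.+1]addn1 Ssum_split // add0n /Ssum big_ord1 /digit expn0 divn1.
rewrite (@modn_small q.+1 k); last by rewrite -(prednK k0) ltnS.
by rewrite /kap addn0 add1n.
Qed.

Lemma x_lt k x : 2 <= k -> x < k ^ x.+1.
Proof. by move=> k2; apply: ltn_trans (ltn_expl _ k2); apply: ltnSn. Qed.

Lemma TMseq_val (R : realType) L k a kappa m : 2 <= k ->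
  TMseq R L k a kappa m = a (Ssum L k kappa m.+1 0 m %% L).
Proof. by move=> k2; rewrite /TMseq ((TMword_spec L k kappa k2 m.+1).2 m) // x_lt. Qed.

Lemma kernel_formula (R : realType) L k a kappa e n j : 2 <= k -> j < k ^ e ->
  TMseq R L k a kappa (k ^ e * n + j) =
  a ((Ssum L k kappa e 0 j + Ssum L k kappa n.+1 e n) %% L).
Proof.
move=> k2 je; have k0 : 0 < k by lia.
rewrite TMseq_val //.
rewrite (Ssum_ext _ _ _ _ _ _ (e + n.+1) k0 (x_lt _ _ k2)).
  by rewrite Ssum_split.
have h1 := x_lt k n k2; rewrite expnD; nia.
Qed.

Lemma Ssum_single L k kappa e i s : 2 <= k -> 0 < s < k ->
  Ssum L k kappa (k ^ i * s).+1 e (k ^ i * s) = kappa s (e + i).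
Proof.
move=> k2 sk; have k0 : 0 < k by lia.
rewrite (Ssum_ext _ _ _ _ _ _ (i + 1) k0 (x_lt _ _ k2)); last first.
  by rewrite expnD expn1 ltn_pmul2l ?expn_gt0 ?k0 //; case/andP: sk.
rewrite -[k ^ i * s]addn0 Ssum_split ?expn_gt0 ?k0 // Ssum0 add0n.
rewrite /Ssum big_ord1 /digit expn0 divn1 modn_small; last by case/andP: sk.
rewrite /kap addn0; case: eqP => //; lia.
Qed.

Theorem proposition5p1 (R : realType) (L k : nat) (a : nat -> R[i])
  (kappa : nat -> nat -> 'I_L) :
  2 <= L -> 2 <= k ->
  {in [pred i | i < L] &, injective a} ->
  n_period L k kappa <-> k_automatic (R[i]) k (TMseq R L k a kappa).
Proof.
move=> L2 k2 ainj; have k0 : 0 < k by lia.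
split.
- move=> [N [t [t0 per]]].
  have perc : forall s c n, 1 <= s <= k.-1 -> N <= n -> kappa s n = kappa s (n + c * t).
    move=> s; elim=> [|c IH] n hs hn; first by rewrite addn0.
    rewrite IH // per //; first by rewrite mulSnr addnA.
    by apply: leq_trans hn (leq_addr _ _).
  pose red e := if e < N then e else N + (e - N) %% t.
  have Yred : forall M e n, Ssum L k kappa M e n = Ssum L k kappa M (red e) n.
    move=> M e n; rewrite /Ssum; apply: eq_bigr => i _; rewrite /kap.
    case: eqP => // d0; rewrite /red; case: ltnP => // eN.
    have dk : digit k i n < k by rewrite /digit ltn_pmod.
    rewrite (perc _ ((e - N) %/ t) (N + (e - N) %% t + i)); last by lia.
      congr (nat_of_ord (kappa _ _)); have := divn_eq (e - N) t.
      by move: ((e - N) %/ t * t) ((e - N) %% t) => A B; lia.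
    by rewrite lt0n -ltnS prednK // dk andbT; apply/eqP.
  rewrite /k_automatic.
  apply: (@sub_finite_set _ _
    [set (fun n => a ((c + Ssum L k kappa n.+1 e n) %% L)) | c in `I_L & e in `I_(N + t)]);
    last by apply: finite_image2; apply: finite_II.
  move=> g [e [j [je ->]]].
  have je' : j < k ^ e.
    have kp : 0 < k ^ e by rewrite expn_gt0 k0.
    move: je kp; move: (k ^ e) => K; lia.
  exists (Ssum L k kappa e 0 j %% L); first by rewrite /= ltn_pmod //; lia.
  exists (red e); first by change (red e < N + t); rewrite /red; case: (ltnP e N) => h; [lia| have := ltn_pmod (e - N) t0; move: ((e - N) %% t) => B; lia].
  apply/funext => n; rewrite kernel_formula // modnDml; congr (a (_ %% L)).
  by rewrite (Yred n.+1 e n).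
- move=> fin.
  pose h e := fun n => TMseq R L k a kappa (k ^ e * n + 0).
  have hker : forall e, k_kernel (R[i]) k (TMseq R L k a kappa) (h e).
    by move=> e; exists e, 0; split.
  have [[e1 [e2 [lt12 eq12]]]|nex] := pselect (exists e1 e2, e1 < e2 /\ h e1 = h e2); last first.
    exfalso; apply: infinite_nat.
    have -> : ([set: nat] = h @^-1` (k_kernel (R[i]) k (TMseq R L k a kappa)))%classic.
      by apply/seteqP; split=> e //= _; apply: hker.
    apply: finite_preimage fin => e1 e2 _ _ eq12.
    case: (ltngtP e1 e2) => // c; exfalso; apply: nex; [exists e1, e2 | exists e2, e1] => //.
  exists e1, (e2 - e1); split; first lia.
  move=> s n hs hn.
  have sk : 0 < s < k.
    case/andP: hs => s0 sk1.
    by rewrite s0 /= (leq_ltn_trans sk1) // ltn_predL k0.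
  have := congr1 (fun g => g (k ^ (n - e1) * s)) eq12; rewrite /h.
  rewrite !kernel_formula ?expn_gt0 ?k0 // !Ssum0 !add0n.
  move=> /ainj; rewrite !inE !ltn_pmod ?(ltn_trans _ L2) // => /(_ isT isT).
  rewrite !Ssum_single // !modn_small ?ltn_ord // => /val_inj.
  have -> : e1 + (n - e1) = n by lia.
  by have -> : e2 + (n - e1) = n + (e2 - e1) by lia.
Qed.
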